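(* Let $n\ge 1$, $a<b$, and let $f:[a,b]\to\mathbb{R}$ be $n$-times differentiable on $[a,b]$. Put $\mathfrak{T}_f(a)=T_{n-1}(f,b)(a)-f(a)$. If $$\left(\frac{f^{(n)}(a)(a-b)^n}{n!}+\mathfrak{T}_f(a)\right)\left(\frac{f^{(n)}(b)(a-b)^n}{n!}+\mathfrak{T}_f(a)\right)\geq 0,$$ then there exists $\eta\in(a,b]$ such that $$\frac{f(\eta)-f(a)}{\eta-a}=\sum_{i=1}^n\frac{(-1)^{i+1}}{i!}(\eta-a)^{i-1}f^{(i)}(\eta).$$
   Context: $n$-times differentiable on $[a,b]$ means $n$-times differentiable on $(a,b)$ with the corresponding one-sided derivatives existing at the endpoints. $T_m(h,x_0)(x)=\sum_{k=0}^m \frac{h^{(k)}(x_0)}{k!}(x-x_0)^k$ denotes the $m$-th Taylor polynomial of $h$ at $x_0$, evaluated at $x$. *)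

(* Defs.v *)
From Stdlib Require Import Reals Lra Arith.
Open Scope R_scope.

(* At an interior point this is the ordinary derivative; at x = a (resp. x = b)
   it is the right (resp. left) one-sided derivative. *)
Definition derive_within (a b : R) (g : R -> R) (x l : R) : Prop :=
  forall eps : R, 0 < eps -> exists delta : R, 0 < delta /\
    forall y : R, a <= y <= b -> 0 < Rabs (y - x) < delta ->
      Rabs ((g y - g x) / (y - x) - l) < eps.

Definition nth_derivs_on (a b : R) (n : nat) (f : R -> R) (D : nat -> R -> R) : Prop :=
  (forall x, a <= x <= b -> D 0%nat x = f x) /\
  (forall k : nat, (k < n)%nat -> forall x, a <= x <= b ->
     derive_within a b (D k) x (D (S k) x)).

Definition taylor_poly (D : nat -> R -> R) (m : nat) (x0 x : R) : R :=
  sum_f_R0 (fun k => D k x0 / INR (fact k) * (x - x0) ^ k) m.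

(* Main.v *)
Require Import Defs.
From Stdlib Require Import Reals Arith.
From Stdlib Require Import Lra Lia Rlimit Ranalysis5.
Open Scope R_scope.


Definition Dw (a b x : R) := fun y => a <= y <= b /\ y <> x.

Lemma dw_lim a b g x l : derive_within a b g x l <->
  limit1_in (fun y => (g y - g x)/(y - x)) (Dw a b x) l x.
Proof.
  unfold derive_within, limit1_in, limit_in, Dw; simpl; unfold Rdist; split.
  - intros H eps He. destruct (H eps He) as [d [Hd H1]]. exists d; split; [lra|].
    intros y [[Hy Hne] Hlt]. apply H1; auto. split; auto. apply Rabs_pos_lt. lra.
  - intros H eps He. destruct (H eps He) as [d [Hd H1]]. exists d; split; [lra|].
    intros y Hy [Hp Hlt]. apply H1. split; auto. split; auto. intro E; subst.
    rewrite Rminus_diag, Rabs_R0 in Hp. lra.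
Qed.

Lemma lim_ext f g D l x : (forall y, D y -> f y = g y) -> limit1_in f D l x -> limit1_in g D l x.
Proof.
  unfold limit1_in, limit_in; intros E H eps He; destruct (H eps He) as [d [Hd H1]];
  exists d; split; auto; intros y [Dy Hy]; rewrite <- E; auto.
Qed.

Lemma lim_const c D x0 : limit1_in (fun _ => c) D c x0.
Proof.
  intros eps He. exists 1; split; [lra|]. intros y _. simpl. unfold Rdist.
  rewrite Rminus_diag, Rabs_R0. lra.
Qed.

Lemma lim_val f D l l' x : limit1_in f D l x -> l = l' -> limit1_in f D l' x.
Proof. intros H E; subst; auto. Qed.

Lemma dw_ext a b f g x l l' : derive_within a b f x l -> (forall y, f y = g y) -> l = l' ->
  derive_within a b g x l'.
Proof.
  intros H E El; subst. unfold derive_within in *. intros eps He.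
  destruct (H eps He) as [d [Hd H1]]. exists d; split; auto. intros y Hy Hl.
  rewrite <- !E. auto.
Qed.

Lemma dw_restr a b c d g x l : derive_within a b g x l -> a <= c -> d <= b ->
  derive_within c d g x l.
Proof.
  unfold derive_within; intros H Hc Hd eps He. destruct (H eps He) as [e [He' H1]].
  exists e; split; auto. intros y Hy. apply H1. lra.
Qed.

Lemma dw_cont a b g x l : derive_within a b g x l -> limit1_in g (Dw a b x) (g x) x.
Proof.
  intro H. apply dw_lim in H.
  assert (H3 := limit_plus _ _ _ _ _ _ (lim_const (g x) (Dw a b x) x)
    (limit_mul _ _ _ _ _ _ H (limit_minus _ _ _ _ _ _ (lim_x (Dw a b x) x) (lim_const x (Dw a b x) x)))).
  replace (g x + l * (x - x)) with (g x) in H3 by ring.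
  eapply lim_ext; [|exact H3]. intros y [_ Hy]. simpl. field. intro E; apply Hy; lra.
Qed.

Lemma dw_const a b c x : derive_within a b (fun _ => c) x 0.
Proof.
  apply dw_lim. eapply lim_ext; [|apply lim_const]. intros y [_ Hy]. simpl. field.
  intro E; apply Hy; lra.
Qed.

Lemma dw_id a b x : derive_within a b (fun y => y) x 1.
Proof.
  apply dw_lim. eapply lim_ext; [|apply lim_const]. intros y [_ Hy]. simpl. field.
  intro E; apply Hy; lra.
Qed.

Lemma dw_plus a b f g x lf lg : derive_within a b f x lf -> derive_within a b g x lg ->
  derive_within a b (fun y => f y + g y) x (lf + lg).
Proof.
  rewrite !dw_lim. intros Hf Hg. eapply lim_ext; [|exact (limit_plus _ _ _ _ _ _ Hf Hg)].
  intros y [_ Hy]. simpl. field. intro E; apply Hy; lra.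
Qed.

Lemma dw_minus a b f g x lf lg : derive_within a b f x lf -> derive_within a b g x lg ->
  derive_within a b (fun y => f y - g y) x (lf - lg).
Proof.
  rewrite !dw_lim. intros Hf Hg. eapply lim_ext; [|exact (limit_minus _ _ _ _ _ _ Hf Hg)].
  intros y [_ Hy]. simpl. field. intro E; apply Hy; lra.
Qed.

Lemma dw_opp a b f x lf : derive_within a b f x lf ->
  derive_within a b (fun y => - f y) x (- lf).
Proof.
  rewrite !dw_lim. intros Hf. eapply lim_ext; [|exact (limit_Ropp _ _ _ _ Hf)].
  intros y [_ Hy]. simpl. field. intro E; apply Hy; lra.
Qed.

Lemma dw_mult a b f g x lf lg : derive_within a b f x lf -> derive_within a b g x lg ->
  derive_within a b (fun y => f y * g y) x (lf * g x + f x * lg).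
Proof.
  intros Hf Hg. assert (Cg := dw_cont _ _ _ _ _ Hg). rewrite dw_lim in *.
  eapply lim_ext; [|exact (limit_plus _ _ _ _ _ _ (limit_mul _ _ _ _ _ _ Hf Cg)
     (limit_mul _ _ _ _ _ _ (lim_const (f x) _ x) Hg))].
  intros y [_ Hy]. simpl. field. intro E; apply Hy; lra.
Qed.

Lemma dw_scal a b c f x lf : derive_within a b f x lf ->
  derive_within a b (fun y => c * f y) x (c * lf).
Proof.
  intros Hf. eapply dw_ext. apply (dw_mult _ _ _ _ _ _ _ (dw_const a b c x) Hf).
  reflexivity. ring.
Qed.

Lemma dw_divc a b c f x lf : derive_within a b f x lf ->
  derive_within a b (fun y => f y / c) x (lf / c).
Proof.
  intros Hf. eapply dw_ext. apply (dw_scal _ _ (/c) _ _ _ Hf).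
  intros; unfold Rdiv; ring. unfold Rdiv; ring.
Qed.

Lemma dw_inv a b g x l : derive_within a b g x l -> g x <> 0 ->
  (forall y, a <= y <= b -> g y <> 0) ->
  derive_within a b (fun y => / g y) x (- l * / g x * / g x).
Proof.
  intros Hg Hgx Hall. assert (Cg := dw_cont _ _ _ _ _ Hg).
  assert (Hi := limit_inv _ _ _ _ Cg Hgx). rewrite dw_lim in *.
  eapply lim_ext; [|exact (limit_mul _ _ _ _ _ _ (limit_mul _ _ _ _ _ _ (limit_Ropp _ _ _ _ Hg) Hi)
     (lim_const (/ g x) _ x))].
  intros y [Hy1 Hy]. simpl. assert (g y <> 0) by auto. field. repeat split; auto.
  intro E; apply Hy; lra.
Qed.

Lemma dw_pow_r a b c k x : derive_within a b (fun y => (c - y)^(S k)) x (- INR (S k) * (c - x)^k).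
Proof.
  induction k.
  - eapply dw_ext. apply (dw_minus _ _ _ _ _ _ _ (dw_const a b c x) (dw_id a b x)).
    intros; simpl; ring. simpl; ring.
  - eapply dw_ext. apply (dw_mult _ _ _ _ _ _ _ (dw_minus _ _ _ _ _ _ _ (dw_const a b c x) (dw_id a b x)) IHk).
    intros; simpl; ring. rewrite (S_INR (S k)). simpl; ring.
Qed.

Lemma dw_pow_l a b c k x : derive_within a b (fun y => (y - c)^(S k)) x (INR (S k) * (x - c)^k).
Proof.
  induction k.
  - eapply dw_ext. apply (dw_minus _ _ _ _ _ _ _ (dw_id a b x) (dw_const a b c x)).
    intros; simpl; ring. simpl; ring.
  - eapply dw_ext. apply (dw_mult _ _ _ _ _ _ _ (dw_minus _ _ _ _ _ _ _ (dw_id a b x) (dw_const a b c x)) IHk).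
    intros; simpl; ring. rewrite (S_INR (S k)). simpl; ring.
Qed.

Definition clamp c d y := Rmax c (Rmin d y).

Lemma clamp_prop c d x y : c <= x <= d ->
  c <= clamp c d y <= d /\ Rabs (clamp c d y - x) <= Rabs (y - x).
Proof.
  intros Hx. unfold clamp, Rmax, Rmin; repeat destruct Rle_dec; split; try lra;
  unfold Rabs; repeat destruct Rcase_abs; lra.
Qed.

Lemma clamp_id c d y : c <= y <= d -> clamp c d y = y.
Proof. intros; unfold clamp, Rmax, Rmin; repeat destruct Rle_dec; lra. Qed.

Lemma cont_clamp c d g x l : c <= x <= d -> derive_within c d g x l ->
  continuity_pt (fun y => g (clamp c d y)) x.
Proof.
  intros Hx H. assert (C := dw_cont _ _ _ _ _ H).
  unfold continuity_pt, continue_in, limit1_in, limit_in in *. simpl in *. unfold Rdist in *.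
  intros eps He. destruct (C eps He) as [al [Hal H1]]. exists al; split; auto.
  intros y [_ Hy]. rewrite (clamp_id c d x) by lra.
  destruct (clamp_prop c d x y Hx) as [Hc Hb].
  destruct (Req_dec (clamp c d y) x) as [E|E].
  - rewrite E, Rminus_diag, Rabs_R0; lra.
  - apply H1. unfold Dw. split; [split; auto|lra].
Qed.

Lemma dw_interior c d g x l : c < x < d -> derive_within c d g x l ->
  derivable_pt_lim (fun y => g (clamp c d y)) x l.
Proof.
  intros Hx H eps He. destruct (H eps He) as [del [Hd H1]].
  assert (P : 0 < Rmin del (Rmin (x - c) (d - x))).
  { repeat apply Rmin_pos; lra. }
  exists (mkposreal _ P). intros h Hh Hl. simpl in Hl.
  assert (Hl1 := Rle_lt_trans _ _ _ (Rle_refl _) Hl).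
  assert (Rabs h < del) by (eapply Rlt_le_trans; [exact Hl|apply Rmin_l]).
  assert (Rabs h < Rmin (x - c) (d - x)) by (eapply Rlt_le_trans; [exact Hl|apply Rmin_r]).
  assert (Rabs h < x - c) by (eapply Rlt_le_trans; [exact H2|apply Rmin_l]).
  assert (Rabs h < d - x) by (eapply Rlt_le_trans; [exact H2|apply Rmin_r]).
  assert (c <= x + h <= d) by (unfold Rabs in *; destruct Rcase_abs; lra).
  rewrite (clamp_id c d x) by lra. rewrite (clamp_id c d (x+h)) by lra.
  replace h with ((x + h) - x) at 2 by ring. apply H1; auto.
  replace (x + h - x) with h by ring. split; auto. apply Rabs_pos_lt; auto.
Qed.

Lemma rolle_within c d g g' : c < d ->
  (forall x, c <= x <= d -> derive_within c d g x (g' x)) -> g c = g d ->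
  exists xi, c < xi < d /\ g' xi = 0.
Proof.
  intros Hcd Hder Heq.
  set (psi := fun y => g (clamp c d y)).
  assert (pr : forall x, c < x < d -> derivable_pt psi x).
  { intros x Hx. exists (g' x). apply dw_interior; auto. apply Hder; lra. }
  assert (Hc : forall x, c <= x <= d -> continuity_pt psi x).
  { intros x Hx. eapply cont_clamp; eauto. }
  assert (E : psi c = psi d).
  { unfold psi. rewrite !clamp_id by lra. auto. }
  destruct (Rolle psi c d pr Hc Hcd E) as [xi [P Hxi]].
  exists xi; split; auto. rewrite <- Hxi. unfold derive_pt. destruct (pr xi P) as [l Hl].
  simpl. eapply uniqueness_limite; [|exact Hl]. apply dw_interior; auto. apply Hder; lra.
Qed.

Lemma mvt_within a b g g' c d : a <= c -> c < d -> d <= b ->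
  (forall x, a <= x <= b -> derive_within a b g x (g' x)) ->
  exists xi, c < xi < d /\ g d - g c = g' xi * (d - c).
Proof.
  intros H1 H2 H3 Hd.
  set (k := (g d - g c) / (d - c)).
  destruct (rolle_within c d (fun y => g y - k * y) (fun y => g' y - k)) as [xi [Hxi E]]; auto.
  - intros x Hx. eapply dw_ext. apply dw_minus. apply (dw_restr a b). apply Hd; lra. lra. lra.
    apply dw_scal. apply dw_id. reflexivity. ring.
  - unfold k. field. lra.
  - exists xi; split; auto. assert (g' xi = k) by lra. rewrite H. unfold k. field. lra.
Qed.

Lemma ivt_within c d g t : c < d ->
  (forall x, c <= x <= d -> exists l, derive_within c d g x l) ->
  ((g c < t < g d) \/ (g d < t < g c)) -> exists z, c < z < d /\ g z = t.
Proof.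
  intros Hcd Hd Ht.
  destruct Ht as [Ht|Ht].
  - destruct (IVT_interv (fun y => (fun y => g y - t) (clamp c d y)) c d) as [z [Hz E]]; auto.
    + intros x Hx. destruct (Hd x Hx) as [l Hl]. apply (cont_clamp c d (fun y => g y - t) x (l - 0)); auto.
      apply dw_minus. apply Hl. apply dw_const.
    + simpl. rewrite clamp_id by lra. lra.
    + simpl. rewrite clamp_id by lra. lra.
    + simpl in E. rewrite clamp_id in E by lra. exists z; split; [|lra].
      destruct Hz as [Hz1 Hz2]. split.
      destruct Hz1; auto; subst; lra. destruct Hz2; auto; subst; lra.
  - destruct (IVT_interv (fun y => (fun y => t - g y) (clamp c d y)) c d) as [z [Hz E]]; auto.
    + intros x Hx. destruct (Hd x Hx) as [l Hl]. apply (cont_clamp c d (fun y => t - g y) x (0 - l)); auto.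
      apply dw_minus. apply dw_const. apply Hl.
    + simpl. rewrite clamp_id by lra. lra.
    + simpl. rewrite clamp_id by lra. lra.
    + simpl in E. rewrite clamp_id in E by lra. exists z; split; [|lra].
      destruct Hz as [Hz1 Hz2]. split.
      destruct Hz1; auto; subst; lra. destruct Hz2; auto; subst; lra.
Qed.

Lemma hump c d g g' q p e : c <= q -> q < p -> p < e -> e <= d ->
  (forall x, c <= x <= d -> derive_within c d g x (g' x)) ->
  g q < g p -> g e < g p -> exists xi, q < xi < e /\ g' xi = 0.
Proof.
  intros H1 H2 H3 H4 Hd Hq He.
  set (t := (Rmax (g q) (g e) + g p) / 2).
  assert (Hm1 := Rmax_l (g q) (g e)). assert (Hm2 := Rmax_r (g q) (g e)).
  assert (Hm3 : Rmax (g q) (g e) < g p) by (apply Rmax_lub_lt; auto).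
  destruct (ivt_within q p g t) as [z1 [Hz1 E1]]; auto.
  { intros x Hx. exists (g' x). apply (dw_restr c d). apply Hd; lra. lra. lra. }
  { left. unfold t; lra. }
  destruct (ivt_within p e g t) as [z2 [Hz2 E2]]; auto.
  { intros x Hx. exists (g' x). apply (dw_restr c d). apply Hd; lra. lra. lra. }
  { right. unfold t; lra. }
  destruct (rolle_within z1 z2 g g') as [xi [Hxi E]]; try lra.
  { intros x Hx. apply (dw_restr c d). apply Hd; lra. lra. lra. }
  exists xi; split; auto; lra.
Qed.

Lemma hump2 c d g g' q p e : c <= q -> q < p -> p < e -> e <= d ->
  (forall x, c <= x <= d -> derive_within c d g x (g' x)) ->
  (g q < g p /\ g e < g p) \/ (g p < g q /\ g p < g e) -> exists xi, q < xi < e /\ g' xi = 0.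
Proof.
  intros H1 H2 H3 H4 Hd [[A B]|[A B]].
  - eapply hump; eauto.
  - destruct (hump c d (fun y => - g y) (fun y => - g' y) q p e) as [xi [Hx E]]; auto; try lra.
    intros; apply dw_opp; auto. exists xi; split; auto; lra.
Qed.

Lemma endpoint_dec c d g l : c < d -> derive_within c d g d l -> l < 0 ->
  exists p, c < p < d /\ g d < g p.
Proof.
  intros Hcd H Hl. destruct (H (- l)) as [del [Hdel H1]]; [lra|].
  set (w := Rmin del (d - c)).
  assert (W0 : 0 < w) by (apply Rmin_pos; lra).
  assert (W1 : w <= d - c) by apply Rmin_r.
  assert (W2 : w <= del) by apply Rmin_l.
  exists (d - w/2). split; [lra|].
  assert (Hq := H1 (d - w/2)).
  assert (EA : Rabs (d - w / 2 - d) = w / 2) by (rewrite Rabs_left; lra).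
  rewrite EA in Hq. specialize (Hq ltac:(lra) ltac:(lra)).
  apply Rabs_def2 in Hq. destruct Hq as [Hq _].
  set (u := g (d - w / 2) - g d) in *.
  set (v := d - w / 2 - d) in *.
  assert (V : v < 0) by (unfold v; lra).
  assert (U1 : u / v < 0) by lra.
  assert (U2 : u = u / v * v) by (field; lra).
  assert (U3 : 0 < u) by nra. unfold u in *. lra.
Qed.

Lemma endpoint_inc c d g l : c < d -> derive_within c d g d l -> 0 < l ->
  exists p, c < p < d /\ g p < g d.
Proof.
  intros Hcd H Hl. destruct (endpoint_dec c d (fun y => - g y) (- l)) as [p [Hp E]]; auto.
  apply dw_opp; auto. lra. exists p; split; auto; lra.
Qed.

Lemma sum_zero (u : nat -> R) c N : sum_f_R0 (fun k => u k * (c - c)^k) N = u 0%nat.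
Proof.
  induction N; simpl; [ring|]. rewrite IHN. replace (c - c) with 0 by ring. ring.
Qed.

Lemma fact_S_INR m : INR (fact (S m)) = INR (S m) * INR (fact m).
Proof. rewrite fact_simpl, mult_INR. reflexivity. Qed.

Lemma dw_taylor a b (g : nat -> R -> R) m x :
  (forall k, (k <= m)%nat -> derive_within a b (g k) x (g (S k) x)) ->
  derive_within a b (fun y => taylor_poly g m y a) x (g (S m) x / INR (fact m) * (a - x)^m).
Proof.
  induction m; intros H.
  - eapply dw_ext. apply (dw_divc _ _ 1). apply (H 0%nat). lia.
    intros; unfold taylor_poly; simpl; field. simpl; field.
  - assert (IH := IHm (fun k Hk => H k ltac:(lia))).
    assert (T := dw_mult _ _ _ _ _ _ _ (dw_divc a b (INR (fact (S m))) _ _ _ (H (S m) ltac:(lia)))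
                  (dw_pow_r a b a m x)).
    eapply dw_ext. apply (dw_plus _ _ _ _ _ _ _ IH T).
    intros; unfold taylor_poly; simpl sum_f_R0 at 2. reflexivity.
    rewrite fact_S_INR. simpl pow.
    assert (INR (fact m) <> 0) by (apply not_0_INR; apply fact_neq_0).
    assert (INR (S m) <> 0) by (apply not_0_INR; lia).
    field. auto.
Qed.

Definition Qp (a : R) (c : nat -> R) (N : nat) (y : R) :=
  sum_f_R0 (fun j => c j / INR (fact j) * (y - a)^j) N.

Lemma dw_Qp A B a c N x : derive_within A B (Qp a c (S N)) x (Qp a (fun j => c (S j)) N x).
Proof.
  induction N.
  - eapply dw_ext. apply (dw_plus _ _ _ _ _ _ _ (dw_const A B (c 0%nat / INR (fact 0)) x)
      (dw_scal _ _ (c 1%nat / INR (fact 1)) _ _ _ (dw_pow_l A B a 0 x))).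
    intros; unfold Qp; simpl; ring. unfold Qp; simpl; field.
  - assert (T := dw_scal A B (c (S (S N)) / INR (fact (S (S N)))) _ _ _ (dw_pow_l A B a (S N) x)).
    eapply dw_ext. apply (dw_plus _ _ _ _ _ _ _ IHN T).
    intros; reflexivity.
    unfold Qp. cbn [sum_f_R0]. f_equal.
    rewrite (fact_S_INR (S N)). cbn [pow].
    assert (INR (fact (S N)) <> 0) by (apply not_0_INR; apply fact_neq_0).
    assert (INR (S (S N)) <> 0) by (apply not_0_INR; lia).
    field. auto.
Qed.

Lemma Qp_at a c N : Qp a c N a = c 0%nat.
Proof.
  unfold Qp. pose proof (sum_zero (fun j => c j / INR (fact j)) a N) as Z. cbv beta in Z. rewrite Z. simpl. field.
Qed.

Definition pp (D : nat -> R -> R) a n k y := Qp a (fun j => D (k + j)%nat a) (n - k) y.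
Definition rr (D : nat -> R -> R) a n k y := D k y - pp D a n k y.

Lemma dw_pp A B D a n k x : (k < n)%nat ->
  derive_within A B (pp D a n k) x (pp D a n (S k) x).
Proof.
  intros Hk. unfold pp. replace (n - k)%nat with (S (n - S k)) by lia.
  eapply dw_ext. apply dw_Qp. intros; reflexivity.
  unfold Qp. apply sum_eq. intros i _. rewrite Nat.add_succ_r. reflexivity.
Qed.

Lemma pp_n D a n y : pp D a n n y = D n a.
Proof. unfold pp, Qp. rewrite Nat.sub_diag. simpl. rewrite Nat.add_0_r. field. Qed.

Lemma pp_a D a n k : pp D a n k a = D k a.
Proof. unfold pp. rewrite Qp_at. rewrite Nat.add_0_r. reflexivity. Qed.

Lemma peano a b (g : nat -> R -> R) m : (1 <= m)%nat ->
  (forall j, (j < m)%nat -> forall x, a <= x <= b -> derive_within a b (g j) x (g (S j) x)) ->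
  (forall j, (j <= m)%nat -> g j a = 0) ->
  forall eps, 0 < eps -> exists del, 0 < del /\ forall x, a <= x <= b -> x - a < del ->
    forall j, (j < m)%nat -> Rabs (g j x) <= eps * (x - a)^(m - j).
Proof.
  revert g. induction m as [|m IH]; intros g Hm Hd Hz eps He; [lia|].
  destruct m as [|m].
  - assert (H0 := Hd 0%nat ltac:(lia) a).
    destruct (Req_dec a b) as [Eab|Nab].
    + exists 1; split; [lra|]. intros x Hx _ j Hj. assert (x = a) by lra. subst x.
      replace j with 0%nat by lia. rewrite Hz by lia. rewrite Rabs_R0. simpl.
      rewrite Rminus_diag. lra.
    + destruct (Rle_lt_dec a b) as [Hab|Hab].
      2:{ exists 1; split; [lra|]. intros x Hx. lra. }
      specialize (H0 ltac:(lra)). destruct (H0 eps He) as [del [Hdel H1]].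
      exists del; split; auto. intros x Hx Hxd j Hj. replace j with 0%nat by lia.
      simpl. rewrite Rmult_1_r.
      destruct (Req_dec x a) as [E|E].
      * subst. rewrite Hz by lia. rewrite Rabs_R0, Rminus_diag. lra.
      * assert (Hq := H1 x Hx). rewrite Rabs_pos_eq in Hq by lra.
        specialize (Hq ltac:(lra)). rewrite !Hz in Hq by lia.
        rewrite Rminus_0_r, Rminus_0_r in Hq.
        replace (g 0%nat x / (x - a)) with (g 0%nat x * / (x - a)) in Hq by reflexivity.
        rewrite Rabs_mult, Rabs_inv, (Rabs_pos_eq (x - a)) in Hq by lra.
        assert (P : 0 < x - a) by lra.
        apply Rmult_lt_compat_r with (r := x - a) in Hq; auto.
        rewrite Rmult_assoc, Rinv_l in Hq by lra. lra.
  - destruct (IH (fun j => g (S j)) ltac:(lia)) with (eps := eps) as [del [Hdel H1]]; auto.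
    { intros j Hj x Hx. apply Hd; auto. lia. }
    { intros j Hj. apply Hz. lia. }
    exists del; split; auto. intros x Hx Hxd j Hj. destruct j as [|j].
    + rewrite Nat.sub_0_r. destruct (Req_dec x a) as [E|E].
      * subst. rewrite Hz by lia. rewrite Rabs_R0, Rminus_diag. simpl. lra.
      * destruct (mvt_within a b (g 0%nat) (g 1%nat) a x) as [xi [Hxi Exi]]; try lra.
        { intros y Hy. apply Hd; auto; lia. }
        rewrite Hz in Exi by lia. rewrite Rminus_0_r in Exi. rewrite Exi.
        assert (B := H1 xi ltac:(lra) ltac:(lra) 0%nat ltac:(lia)). simpl in B.
        try rewrite Nat.sub_0_r in B.
        rewrite Rabs_mult, (Rabs_pos_eq (x - a)) by lra.
        assert (Pw : (xi - a)^(S m) <= (x - a)^(S m)) by (apply pow_incr; lra).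
        simpl pow. simpl pow in Pw.
        assert (0 <= Rabs (g 1%nat xi)) by apply Rabs_pos.
        assert (0 < x - a) by lra.
        apply Rle_trans with (eps * (x - a) * (x - a) ^ m * (x - a)); [|right; ring].
        apply Rmult_le_compat_r; [lra|]. nra.
    + assert (B := H1 x Hx Hxd j ltac:(lia)). simpl in B. simpl. exact B.
Qed.

Lemma neg_pow a x k : (a - x)^k = (-1)^k * (x - a)^k.
Proof. rewrite <- Rpow_mult_distr. f_equal. ring. Qed.

Lemma tp_at g m a : taylor_poly g m a a = g 0%nat a.
Proof.
  unfold taylor_poly. pose proof (sum_zero (fun j => g j a / INR (fact j)) a m) as Z.
  cbv beta in Z. rewrite Z. simpl. field.
Qed.

Lemma finish (D : nat -> R -> R) f a eta m : a < eta -> D 0%nat eta = f eta ->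
  taylor_poly D m eta a - f a + D (S m) eta * (a - eta)^(S m) / INR (fact (S m)) = 0 ->
  (f eta - f a) / (eta - a) =
    sum_f_R0 (fun j => (-1) ^ (j + 2) / INR (fact (j + 1))
                       * (eta - a) ^ j * D (j + 1)%nat eta) m.
Proof.
  intros Ha H0 HG.
  assert (E : taylor_poly D m eta a + D (S m) eta * (a - eta)^(S m) / INR (fact (S m))
     = sum_f_R0 (fun k => D k eta / INR (fact k) * (a - eta)^k) (S m)) by (unfold taylor_poly; cbn [sum_f_R0]; field; apply not_0_INR, fact_neq_0).
  rewrite decomp_sum in E by lia. cbv beta in E. simpl pred in E.
  assert (S1 : sum_f_R0 (fun i => D (S i) eta / INR (fact (S i)) * (a - eta)^(S i)) m =
     - (eta - a) * sum_f_R0 (fun j => (-1) ^ (j + 2) / INR (fact (j + 1))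
                       * (eta - a) ^ j * D (j + 1)%nat eta) m).
  { rewrite scal_sum. apply sum_eq. intros i _.
    replace (i + 2)%nat with (S (S i)) by lia. replace (i + 1)%nat with (S i) by lia.
    rewrite neg_pow. cbn [pow]. field. apply not_0_INR, fact_neq_0. }
  rewrite S1 in E. rewrite H0 in E. simpl (INR (fact 0)) in E.
  apply Rmult_eq_reg_r with (eta - a); [|lra].
  unfold Rdiv. rewrite Rmult_assoc, Rinv_l by lra. lra.
Qed.

Lemma abs_le x e : Rabs x <= e -> -e <= x <= e.
Proof. unfold Rabs; destruct Rcase_abs; lra. Qed.

Theorem mainTheorem14 (n : nat) (a b : R) (f : R -> R) (D : nat -> R -> R) :
  (1 <= n)%nat -> a < b ->
  nth_derivs_on a b n f D ->
  let Tf := taylor_poly D (n - 1) b a - f a in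
  (D n a * (a - b) ^ n / INR (fact n) + Tf) *
  (D n b * (a - b) ^ n / INR (fact n) + Tf) >= 0 ->
  exists eta : R, a < eta <= b /\
    (f eta - f a) / (eta - a) =
    sum_f_R0 (fun j => (-1) ^ (j + 2) / INR (fact (j + 1))
                       * (eta - a) ^ j * D (j + 1)%nat eta) (n - 1).
Proof.
  intros Hn Hab [H0 Hd] Tf Hyp. unfold Tf in Hyp; clear Tf.
  destruct n as [|m]; [lia|]. replace (S m - 1)%nat with m by lia.
  replace (S m - 1)%nat with m in Hyp by lia.
  set (F := fun x => taylor_poly D m x a - f a).
  assert (dF : forall x, a <= x <= b ->
     derive_within a b F x (D (S m) x / INR (fact m) * (a - x)^m)).
  { intros x Hx. eapply dw_ext. apply dw_minus. apply (dw_taylor a b D m x).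
    intros k Hk. apply Hd; [lia|lra]. apply (dw_const a b (f a) x). reflexivity. ring. }
  assert (Hfm : INR (fact m) <> 0) by (apply not_0_INR, fact_neq_0).
  assert (HSm : INR (S m) <> 0) by (apply not_0_INR; lia).
  set (r := rr D a (S m)).
  assert (dr : forall k, (k < S m)%nat -> forall y, a <= y <= b ->
     derive_within a b (r k) y (r (S k) y)).
  { intros k Hk y Hy. unfold r, rr. apply dw_minus. apply Hd; auto. apply dw_pp; auto. }
  assert (Zid : forall x, a <= x <= b ->
     F x + D (S m) a * (a - x)^(S m) / INR (fact (S m)) = taylor_poly r m x a).
  { set (Z := fun y => F y + D (S m) a * (a - y)^(S m) / INR (fact (S m)) - taylor_poly r m y a).
    assert (dZ : forall y, a <= y <= b -> derive_within a b Z y ((fun _ => 0) y)).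
    { intros y Hy. eapply dw_ext. apply dw_minus. apply dw_plus. apply dF; auto.
      apply (dw_divc a b (INR (fact (S m)))). apply (dw_scal a b (D (S m) a)). apply (dw_pow_r a b a m).
      apply (dw_taylor a b r m y).
      intros k Hk. apply dr; [lia|lra]. reflexivity.
      unfold r, rr. rewrite pp_n, fact_S_INR. field. auto. }
    assert (Za : Z a = 0).
    { unfold Z, F. rewrite !tp_at. unfold r, rr. rewrite pp_a, H0 by lra.
      replace (a - a) with 0 by ring. rewrite pow_i by lia. unfold Rdiv. ring. }
    intros x Hx. destruct (Req_dec x a) as [E|E].
    - subst x. unfold Z in Za. lra.
    - destruct (mvt_within a b Z (fun _ => 0) a x) as [xi [_ Exi]]; try lra; auto.
      unfold Z in Exi, Za. lra. }
  assert (Bnd : forall eps, 0 < eps -> exists del, 0 < del /\ forall x, a < x <= b -> x - a < del ->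
     Rabs (taylor_poly r m x a) <= eps * (x - a)^(S m)).
  { intros eps He.
    destruct (peano a b r (S m) ltac:(lia) dr) with (eps := eps / INR (S m)) as [del [Hdel H1]].
    { intros j Hj. unfold r, rr. rewrite pp_a. ring. }
    { apply Rdiv_lt_0_compat; auto. apply lt_0_INR; lia. }
    exists del; split; auto. intros x Hx Hxd.
    unfold taylor_poly. eapply Rle_trans. apply sum_f_R0_triangle.
    eapply Rle_trans. apply sum_Rle with (Bn := fun _ => eps / INR (S m) * (x - a)^(S m)).
    2:{ rewrite sum_cte. right. field. auto. }
    intros k Hk. cbv beta.
    assert (B := H1 x ltac:(lra) Hxd k ltac:(lia)).
    unfold Rdiv. rewrite !Rabs_mult, Rabs_inv, <- RPow_abs.
    rewrite (Rabs_pos_eq (INR (fact k))) by (left; apply INR_fact_lt_0).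
    rewrite (Rabs_left1 (a - x)) by lra. replace (- (a - x)) with (x - a) by ring.
    replace ((x - a)^(S m)) with ((x - a)^(S m - k) * (x - a)^k)
      by (rewrite <- pow_add; f_equal; lia).
    assert (F1 : 1 <= INR (fact k)).
    { replace 1 with (INR 1) by reflexivity. apply le_INR. apply lt_O_fact. }
    assert (I1 : / INR (fact k) <= 1).
    { apply Rmult_le_reg_l with (INR (fact k)); [lra|]. rewrite Rinv_r by lra. lra. }
    assert (I0 : 0 <= / INR (fact k)) by (left; apply Rinv_0_lt_compat; lra).
    assert (T0 : 0 <= (x - a)^k) by (apply pow_le; lra).
    assert (R0 : 0 <= Rabs (r k x)) by apply Rabs_pos.
    apply Rle_trans with (Rabs (r k x) * 1 * (x - a)^k).
    - apply Rmult_le_compat_r; auto. apply Rmult_le_compat_l; auto.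
    - rewrite Rmult_1_r. rewrite <- Rmult_assoc. apply Rmult_le_compat_r; auto.
      }
  set (L := - D (S m) a * (-1)^(S m) / INR (fact (S m))).
  set (h := fun x => F x * / (x - a)^(S m)).
  assert (Lim : forall eps, 0 < eps -> forall p, a < p <= b -> exists q, a < q < p /\ Rabs (h q - L) <= eps).
  { intros eps He p Hp. destruct (Bnd eps He) as [del [Hdel H1]].
    set (q := a + Rmin del (p - a) / 2).
    assert (W0 : 0 < Rmin del (p - a)) by (apply Rmin_pos; lra).
    assert (W1 : Rmin del (p - a) <= p - a) by apply Rmin_r.
    assert (W2 : Rmin del (p - a) <= del) by apply Rmin_l.
    exists q. unfold q; split; [lra|].
    assert (Pq : 0 < (q - a)^(S m)) by (apply pow_lt; unfold q; lra).
    assert (E : h q - L = taylor_poly r m q a / (q - a)^(S m)).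
    { rewrite <- Zid by (unfold q; lra). unfold h, L. rewrite (neg_pow a q). field.
      all: repeat split; try (apply pow_nonzero); unfold q; try lra; apply not_0_INR, fact_neq_0. }
    fold q. rewrite E. unfold Rdiv. rewrite Rabs_mult, Rabs_inv, (Rabs_pos_eq ((q-a)^(S m))) by lra.
    assert (Bq := H1 q ltac:(unfold q; lra) ltac:(unfold q; lra)).
    apply Rmult_le_reg_r with ((q - a)^(S m)); auto.
    rewrite Rmult_assoc, Rinv_l by lra. lra. }
  set (K := fun x => D (S m) x / INR (fact m) * (a - x)^m * / (x - a)^(S m) +
                     F x * (- (INR (S m) * (x - a)^m) * / (x - a)^(S m) * / (x - a)^(S m))).
  assert (dh : forall c, a < c <= b -> forall x, c <= x <= b -> derive_within c b h x (K x)).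
  { intros c Hc x Hx. eapply dw_ext. apply dw_mult. apply (dw_restr a b). apply dF; lra. lra. lra.
    apply (dw_inv c b (fun y => (y - a)^(S m))). apply (dw_pow_l c b a m). apply pow_nonzero; lra.
    intros y Hy; apply pow_nonzero; lra. reflexivity. unfold K. ring. }
  set (G := fun x => F x + D (S m) x * (a - x)^(S m) / INR (fact (S m))).
  assert (KG : forall x, a < x -> K x * (x - a)^(S (S m)) = - INR (S m) * G x).
  { intros x Hx. unfold K, G. rewrite fact_S_INR. cbn [pow].
    assert ((x - a)^m <> 0) by (apply pow_nonzero; lra).
    field. repeat split; auto; lra. }
  assert (Fin : forall eta, a < eta <= b -> G eta = 0 -> exists eta : R, a < eta <= b /\
    (f eta - f a) / (eta - a) =
    sum_f_R0 (fun j => (-1) ^ (j + 2) / INR (fact (j + 1))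
                       * (eta - a) ^ j * D (j + 1)%nat eta) m).
  { intros eta He HG. exists eta. split; auto. apply finish; [lra| apply H0; lra | exact HG]. }
  assert (KZ : forall xi, a < xi -> K xi = 0 -> G xi = 0).
  { intros xi Hxi E. assert (T := KG xi Hxi). rewrite E in T.
    assert (0 < INR (S m)) by (apply lt_0_INR; lia). nra. }
  assert (HA : D (S m) a * (a - b)^(S m) / INR (fact (S m)) + (taylor_poly D m b a - f a)
               = (b - a)^(S m) * (h b - L)).
  { unfold h, L, F. rewrite (neg_pow a b). field.
    all: repeat split; try (apply pow_nonzero); try lra; apply not_0_INR, fact_neq_0. }
  assert (HB : D (S m) b * (a - b)^(S m) / INR (fact (S m)) + (taylor_poly D m b a - f a) = G b).
  { unfold G, F. ring. }
  rewrite HA, HB in Hyp.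
  assert (Pb : 0 < (b - a)^(S m)) by (apply pow_lt; lra).
  assert (Pb2 : 0 < (b - a)^(S (S m))) by (apply pow_lt; lra).
  set (c0 := h b - L) in *.
  assert (CS : c0 * G b >= 0).
  { destruct (Rlt_le_dec (c0 * G b) 0); [|lra]. nra. }
  assert (KGb := KG b Hab).
  assert (Pn : 0 < INR (S m)) by (apply lt_0_INR; lia).
  assert (Mid : a < (a + b) / 2 <= b) by lra.
  destruct (Req_dec (G b) 0) as [Gb|Gb].
  { apply (Fin b); auto; lra. }
  destruct (Rtotal_order c0 0) as [Cn|[Cz|Cp]].
  - assert (Gn : G b < 0) by (destruct (Rtotal_order (G b) 0) as [?|[?|?]]; [auto|contradiction|nra]).
    assert (Kp : 0 < K b) by nra.
    destruct (endpoint_inc ((a + b)/2) b h (K b)) as [p [Hp Ep]]; try lra.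
    { apply dh; lra. }
    destruct (Lim (- c0 / 2) ltac:(lra) p ltac:(lra)) as [q [Hq Eq]].
    apply abs_le in Eq.
    destruct (hump2 q b h K q p b) as [xi [Hxi Exi]]; try lra.
    { apply dh; lra. }
    { right. unfold c0 in *. lra. }
    apply (Fin xi); [lra|]. apply KZ; auto; lra.
  - destruct (Rtotal_order (h ((a+b)/2)) (h b)) as [Lt|[Eq|Gt]].
    + destruct (Lim ((h b - h ((a+b)/2)) / 2) ltac:(lra) ((a+b)/2) Mid) as [q [Hq Eq]].
      apply abs_le in Eq.
      destruct (hump2 q b h K q ((a+b)/2) b) as [xi [Hxi Exi]]; try lra.
      { apply dh; lra. }
      { right. unfold c0 in *. lra. }
      apply (Fin xi); [lra|]. apply KZ; auto; lra.
    + destruct (rolle_within ((a+b)/2) b h K) as [xi [Hxi Exi]]; try lra.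
      { apply dh; lra. }
      apply (Fin xi); [lra|]. apply KZ; auto; lra.
    + destruct (Lim ((h ((a+b)/2) - h b) / 2) ltac:(lra) ((a+b)/2) Mid) as [q [Hq Eq]].
      apply abs_le in Eq.
      destruct (hump2 q b h K q ((a+b)/2) b) as [xi [Hxi Exi]]; try lra.
      { apply dh; lra. }
      { left. unfold c0 in *. lra. }
      apply (Fin xi); [lra|]. apply KZ; auto; lra.
  - assert (Gp : 0 < G b) by (destruct (Rtotal_order (G b) 0) as [?|[?|?]]; [nra|contradiction|auto]).
    assert (Kn : K b < 0) by nra.
    destruct (endpoint_dec ((a + b)/2) b h (K b)) as [p [Hp Ep]]; try lra.
    { apply dh; lra. }
    destruct (Lim (c0 / 2) ltac:(lra) p ltac:(lra)) as [q [Hq Eq]].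
    apply abs_le in Eq.
    destruct (hump2 q b h K q p b) as [xi [Hxi Exi]]; try lra.
    { apply dh; lra. }
    { left. unfold c0 in *. lra. }
    apply (Fin xi); [lra|]. apply KZ; auto; lra.
Qed.
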